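(* Let $\Gamma$ be a nontrivial group, $K=\bigoplus_{\mathbf{Q}_2}\Gamma$, $\overline K=\prod_{\mathbf{Q}_2}\Gamma$, $G=K\rtimes V$ (untwisted) inside $\overline G=\overline K\rtimes V$, and identify $Z\Gamma$ with the constant $Z\Gamma$-valued maps in $\overline K$. Then the formula $\sigma_0(\varphi,\beta)(\zeta,f)=(\beta(\zeta),\ \overline\beta(f)^\varphi\cdot\beta(\zeta)^{\mu_\varphi})$, for $(\varphi,\beta)\in\mathrm{Stab}_N(\mathbf{Q}_2)\times\mathrm{Aut}(\Gamma)$ and $(\zeta,f)\in Z\Gamma\times\overline K/Z\Gamma$, defines an action by automorphisms of $\mathrm{Stab}_N(\mathbf{Q}_2)\times\mathrm{Aut}(\Gamma)$ on $Z\Gamma\times\overline K/Z\Gamma$; it preserves $Z\Gamma\times N_{\overline K}(G)/Z\Gamma$, and the induced map $\sigma:\mathrm{Stab}_N(\mathbf{Q}_2)\times\mathrm{Aut}(\Gamma)\to\mathrm{Aut}(Z\Gamma\times N_{\overline K}(G)/Z\Gamma)$ is an injective group morphism.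
   Context: Cantor space $\mathfrak C=\{0,1\}^{\mathbf N}$; $C_m=\{m\cdot x\}$. Thompson's group $V$: homeomorphisms $v$ with $v(m_kx)=m'_kx$ for partitions $\mathfrak C=\bigsqcup C_{m_k}=\bigsqcup C_{m'_k}$; slope $v'(x)=2^{|m_k|-|m'_k|}$ on $C_{m_k}$. $\mathbf{Q}_2$: eventually-zero sequences, identified with dyadic rationals of $[0,1)$ via $x\mapsto\sum_{n\ge1}x_n2^{-n}$; $0$ is the zero sequence. $\nu$: dyadic valuation ($\nu(0)=0$, $\nu(2^kp/q)=k$ for $p,q$ odd). $\mathrm{Stab}_N(\mathbf{Q}_2)=\{\varphi\in\mathrm{Homeo}(\mathfrak C):\varphi V\varphi^{-1}=V,\varphi(\mathbf{Q}_2)=\mathbf{Q}_2\}$. $V$ acts on $\overline K$ by $f^v(x)=f(v^{-1}x)$; $N_{\overline K}(G)=\{f\in\overline K:fGf^{-1}=G\}$. $f^\varphi(x)=f(\varphi^{-1}x)$, $\overline\beta(f)(x)=\beta(f(x))$. $\mu_\varphi(x)=\log_2((\varphi^{-1}v\varphi)'(\varphi^{-1}0))-\log_2(v'(0))-\nu(\varphi^{-1}x)+\nu(x)$ for any $v\in V$ with $v0=x$ (independent of $v$), and $\beta(\zeta)^{\mu_\varphi}(x)=\beta(\zeta)^{\mu_\varphi(x)}$. *)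

(* Defs.v *)
From HB Require Import structures.
From mathcomp Require Import all_boot all_order all_algebra.
Import Order.TTheory GRing.Theory Num.Theory.
From Stdlib Require Import ClassicalEpsilon.
Set Implicit Arguments. Unset Strict Implicit. Unset Printing Implicit Defensive.

Definition C := nat -> bool.

Definition zeroC : C := fun _ => false.

Definition catC (m : seq bool) (x : C) : C :=
  fun i => if i < size m then nth false m i else x (i - size m).

Definition prefixC (m : seq bool) (x : C) : Prop :=
  forall i, i < size m -> x i = nth false m i.

Definition is_partition (ms : seq (seq bool)) : Prop :=
  forall x : C, exists! k, k < size ms /\ prefixC (nth [::] ms k) x.

Definition continuousC (h : C -> C) : Prop :=
  forall (x : C) (n : nat), exists m : nat, forall y : C,
    (forall i, i < m -> y i = x i) -> forall i, i < n -> h y i = h x i.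

Definition is_homeo (h : C -> C) : Prop :=
  exists h' : C -> C, cancel h h' /\ cancel h' h /\ continuousC h /\ continuousC h'.

Definition inV (v : C -> C) : Prop :=
  is_homeo v /\
  exists ms ms' : seq (seq bool),
    size ms = size ms' /\ is_partition ms /\ is_partition ms' /\
    forall k (x : C), k < size ms ->
      v (catC (nth [::] ms k) x) = catC (nth [::] ms' k) x.

Record homeo := Homeo {
  hfun :> C -> C;
  hinv : C -> C;
  hfunK : cancel hfun hinv;
  hinvK : cancel hinv hfun;
  hfun_cont : continuousC hfun;
  hinv_cont : continuousC hinv }.

Lemma continuousC_comp (g f : C -> C) :
  continuousC g -> continuousC f -> continuousC (g \o f).
Proof.
move=> cg cf x n; have [m1 Hm1] := cg (f x) n; have [m Hm] := cf x m1.
by exists m => y Hy i Hi /=; apply: Hm1 => // j Hj; apply: Hm.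
Qed.

Lemma continuousC_id : continuousC id.
Proof. by move=> x n; exists n => y Hy i Hi; apply: Hy. Qed.

Lemma hcomp_K (p q : homeo) : cancel (hfun p \o hfun q) (hinv q \o hinv p).
Proof. by move=> x /=; rewrite !hfunK. Qed.

Lemma hcomp_Ki (p q : homeo) : cancel (hinv q \o hinv p) (hfun p \o hfun q).
Proof. by move=> x /=; rewrite !hinvK. Qed.

Definition hcomp (p q : homeo) : homeo :=
  @Homeo (hfun p \o hfun q) (hinv q \o hinv p) (hcomp_K p q) (hcomp_Ki p q)
    (continuousC_comp (hfun_cont p) (hfun_cont q))
    (continuousC_comp (hinv_cont q) (hinv_cont p)).

Definition hid : homeo :=
  @Homeo id id (fun x => erefl) (fun x => erefl) continuousC_id continuousC_id.

Definition inQ2 (x : C) : Prop := exists N, forall n, N <= n -> x n = false.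

Definition inStabN (p : homeo) : Prop :=
  (forall v, inV v -> inV (hfun p \o v \o hinv p)) /\
  (forall w, inV w -> exists v, inV v /\ w = hfun p \o v \o hinv p) /\
  (forall x, inQ2 x -> inQ2 (p x)) /\
  (forall y, inQ2 y -> exists x, inQ2 x /\ p x = y).

Local Open Scope ring_scope.

(* log_2 of the slope h'(x) = 2^{|m|-|m'|}, where h(m y) = m' y near x *)
Definition logslope (h : C -> C) (x : C) : int :=
  epsilon (inhabits 0) (fun n : int => exists m m' : seq bool,
    prefixC m x /\ (forall y, h (catC m y) = catC m' y) /\
    n = (size m)%:Z - (size m')%:Z).

(* identification of x in Q_2 with the dyadic rational sum_{n>=1} x_n 2^{-n}
   (bits x_n, n >= 1, are stored at index n-1) *)
Definition dyval (x : C) : rat :=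
  epsilon (inhabits 0) (fun r : rat => exists N : nat,
    (forall n, (N <= n)%N -> x n = false) /\
    r = \sum_(i < N) (nat_of_bool (x i))%:R / 2%:R ^+ i.+1).

(* dyadic valuation: nu 0 = 0, nu (2^k p/q) = k for p, q odd *)
Definition nu (r : rat) : int :=
  epsilon (inhabits 0) (fun k : int =>
    (r = 0 /\ k = 0) \/
    exists p q : int, odd `|p|%N /\ odd `|q|%N /\ r = 2%:R ^ k * p%:~R / q%:~R).

Definition mu (p : homeo) (x : C) : int :=
  let v := epsilon (inhabits id) (fun v : C -> C => inV v /\ v zeroC = x) in
  logslope (hinv p \o v \o hfun p) (hinv p zeroC) - logslope v zeroC
  - nu (dyval (hinv p x)) + nu (dyval x).

Local Close Scope ring_scope.

Local Open Scope group_scope.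

Section GammaDefs.
Variable G : groupType.

Definition central (z : G) : Prop := forall g : G, z * g = g * z.

Definition gpowz (g : G) (n : int) : G :=
  match n with Posz k => g ^+ k | Negz k => (g ^+ k.+1)^-1 end.

Definition is_aut (b : G -> G) : Prop := {morph b : x y / x * y} /\ bijective b.

(* elements of Kbar = prod_{Q_2} Gamma are represented by maps C -> Gamma,
   only their values on Q_2 are relevant *)
Definition inK (k : C -> G) : Prop :=
  exists l : seq C, forall x, inQ2 x -> k x <> 1 -> List.In x l.

(* N_{Kbar}(G): f G f^-1 \subset G and f^-1 G f \subset G inside Kbar x| V,
   where (f,1)(k,v)(f^-1,1) = (f k (f^-1)^v, v) and f^v(x) = f(v^-1 x) *)
Definition inNK (f : C -> G) : Prop :=
  (forall (k : C -> G) (v w : C -> C), inK k -> inV v -> cancel v w -> cancel w v ->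
     inK (fun x => f x * k x * (f (w x))^-1)) /\
  (forall (k : C -> G) (v w : C -> C), inK k -> inV v -> cancel v w -> cancel w v ->
     inK (fun x => (f x)^-1 * k x * f (w x))).

(* Z(Gamma) x Kbar/Z(Gamma): pairs (zeta, f), modulo the relation below *)
Definition QE := (G * (C -> G))%type.

Definition inZK (a : QE) : Prop := central a.1.
Definition inZN (a : QE) : Prop := central a.1 /\ inNK a.2.

Definition qeq (a b : QE) : Prop :=
  a.1 = b.1 /\ exists c : G, central c /\ forall x, inQ2 x -> b.2 x = a.2 x * c.

Definition qmul (a b : QE) : QE := (a.1 * b.1, fun x => a.2 x * b.2 x).

Definition is_quot_aut (P : QE -> Prop) (F : QE -> QE) : Prop :=
  (forall a, P a -> P (F a)) /\
  (forall a b, P a -> P b -> qeq a b -> qeq (F a) (F b)) /\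
  (forall a b, P a -> P b -> qeq (F (qmul a b)) (qmul (F a) (F b))) /\
  (forall a b, P a -> P b -> qeq (F a) (F b) -> qeq a b) /\
  (forall b, P b -> exists a, P a /\ qeq (F a) b).

Definition sigma0 (p : homeo) (b : G -> G) (a : QE) : QE :=
  (b a.1, fun x => b (a.2 (hinv p x)) * gpowz (b a.1) (mu p x)).

End GammaDefs.

(* Main.v *)
Require Import Defs.
From mathcomp Require Import all_boot all_order all_algebra.
From Stdlib Require Import ClassicalEpsilon FunctionalExtensionality.
From mathcomp Require Import zify ring.
Import Order.TTheory GRing.Theory Num.Theory.
Set Implicit Arguments. Unset Strict Implicit. Unset Printing Implicit Defensive.

Module M1.

Definition cdrop (n : nat) (x : C) : C := fun i => x (n + i).
Definition ctake (n : nat) (x : C) : seq bool := mkseq x n.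

Lemma size_ctake n x : size (ctake n x) = n.
Proof. by rewrite size_mkseq. Qed.

Lemma catC_take_drop n x : catC (ctake n x) (cdrop n x) = x.
Proof.
apply: functional_extensionality => i; rewrite /catC size_ctake /cdrop.
case: ltnP => h; first by rewrite nth_mkseq.
by rewrite /= subnKC.
Qed.

Lemma prefixC_catC m y : prefixC m (catC m y).
Proof. by move=> i hi; rewrite /catC hi. Qed.

Lemma cdrop_catC m y : cdrop (size m) (catC m y) = y.
Proof.
apply: functional_extensionality => i; rewrite /cdrop /catC.
by rewrite ltnNge leq_addr /= addKn.
Qed.

Lemma catC_cat a b y : catC (a ++ b) y = catC a (catC b y).
Proof.
apply: functional_extensionality => i; rewrite /catC size_cat nth_cat.
case: (ltnP i (size a)) => h1.
  by rewrite (ltn_addr _ h1).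
have -> : (i < size a + size b) = (i - size a < size b).
  by rewrite -[in RHS](ltn_add2l (size a)) (subnKC h1).
case: ltnP => // h2; by rewrite subnDA.
Qed.

Arguments prefixC_catC : clear implicits.

Lemma prefixC_take m x : prefixC m x -> m = ctake (size m) x.
Proof.
move=> h; apply: (@eq_from_nth _ false); rewrite ?size_ctake // => i hi.
by rewrite nth_mkseq // h.
Qed.

Lemma ctake_prefix n x : prefixC (ctake n x) x.
Proof. by move=> i; rewrite size_ctake => hi; rewrite nth_mkseq. Qed.

Arguments ctake_prefix : clear implicits.

Lemma prefixC_eq m x : prefixC m x -> x = catC m (cdrop (size m) x).
Proof.
move=> h; rewrite {1}(prefixC_take h) -{1}(catC_take_drop (size m) x).
by rewrite -(prefixC_take h).
Qed.

Lemma ctake_catC m y n : n <= size m -> ctake n (catC m y) = take n m.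
Proof.
move=> hn; apply: (@eq_from_nth _ false); rewrite ?size_ctake ?size_takel //.
move=> i hi; rewrite nth_mkseq // nth_take // /catC.
by rewrite (leq_trans hi hn).
Qed.

Lemma prefixC_le a b x : prefixC a x -> prefixC b x -> size a <= size b ->
  b = a ++ drop (size a) b.
Proof.
move=> ha hb hab; rewrite -{1}(cat_take_drop (size a) b); congr (_ ++ _).
rewrite (prefixC_take ha) (prefixC_take hb).
apply: (@eq_from_nth _ false); rewrite ?size_takel ?size_ctake //.
by move=> i hi; rewrite nth_take // !nth_mkseq // (leq_trans hi hab).
Qed.

Lemma prefixC_cat a b x : prefixC (a ++ b) x -> prefixC a x.
Proof.
move=> h i hi; have := h i; rewrite size_cat nth_cat hi; apply.
by rewrite ltn_addr.
Qed.

Lemma catC_size_eq a b : (forall y, catC a y = catC b y) -> size a = size b.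
Proof.
wlog: a b / size a < size b.
  move=> W h; case: (ltngtP (size a) (size b)) => // hl.
  - exact: W.
  - by symmetry; apply: W => // y; rewrite h.
move=> hl h; exfalso.
have := congr1 (fun f => f (size a)) (h (fun _ => ~~ nth false b (size a))).
rewrite /catC ltnn hl; by case: (nth false b (size a)).
Qed.

Definition wit (h : C -> C) (x : C) (m m' : seq bool) :=
  prefixC m x /\ forall y, h (catC m y) = catC m' y.

Lemma wit_cat h x m m' r : wit h x m m' -> prefixC (m ++ r) x ->
  wit h x (m ++ r) (m' ++ r).
Proof. by move=> [_ hw] hp; split => // y; rewrite !catC_cat hw. Qed.

Lemma wit_out h x m m' : wit h x m m' -> prefixC m' (h x).
Proof.
by move=> [hp hw]; rewrite (prefixC_eq hp) hw; apply: prefixC_catC.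
Qed.

Local Open Scope ring_scope.

Definition wdiff (m m' : seq bool) : int := (size m)%:Z - (size m')%:Z.

Lemma wdiff_cat m m' r : wdiff (m ++ r) (m' ++ r) = wdiff m m'.
Proof. rewrite /wdiff !size_cat !PoszD; lia. Qed.

Lemma wdiff_trans a b c : wdiff a b + wdiff b c = wdiff a c.
Proof. rewrite /wdiff; lia. Qed.

Lemma wit_unique h x m1 m1' m2 m2' : wit h x m1 m1' -> wit h x m2 m2' ->
  wdiff m1 m1' = wdiff m2 m2'.
Proof.
wlog: m1 m1' m2 m2' / (size m1 <= size m2)%N.
  move=> W h1 h2; case: (leqP (size m1) (size m2)) => hl; first exact: W.
  by symmetry; apply: W => //; apply: ltnW.
move=> hl h1 h2.
have e := prefixC_le h1.1 h2.1 hl.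
have h3 := wit_cat h1 (_ : prefixC (m1 ++ drop (size m1) m2) x).
rewrite -e in h3; have {}h3 := h3 h2.1.
have hs : size (m1' ++ drop (size m1) m2) = size m2'.
  by apply: catC_size_eq => y; rewrite -h3.2 h2.2.
rewrite -(wdiff_cat m1 m1' (drop (size m1) m2)) -e /wdiff hs //.
Qed.

Lemma logslope_wit h x m m' : wit h x m m' -> logslope h x = wdiff m m'.
Proof.
move=> hw; rewrite /logslope.
match goal with |- epsilon ?i ?P = _ =>
  have : exists n, P n
end.
  exists (wdiff m m'), m, m'; case: hw => h1 h2; by split.
move=> /epsilon_spec H; have [a [a' [h1 [h2 ->]]]] := H (inhabits 0).
by apply: (wit_unique (h := h) (x := x)).
Qed.

Lemma prefixC_catC_le a b x y : prefixC a x -> prefixC b x ->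
  (size a <= size b)%N -> prefixC a (catC b y).
Proof.
move=> ha hb hl; rewrite (prefixC_le ha hb hl) catC_cat; exact: prefixC_catC.
Qed.

Lemma wit_extend h x m m' n : wit h x m m' -> (size m <= n)%N ->
  exists m'', wit h x (ctake n x) m'' /\ wdiff (ctake n x) m'' = wdiff m m'.
Proof.
move=> hw hl.
have hl' : (size m <= size (ctake n x))%N by rewrite size_ctake.
have e := prefixC_le hw.1 (ctake_prefix n x) hl'.
exists (m' ++ drop (size m) (ctake n x)); split.
  rewrite {1}e; apply: wit_cat => //; rewrite -e; exact: ctake_prefix.
by rewrite {1}e wdiff_cat.
Qed.

Lemma wit_chain g h x m m' n n' : wit h x m m' -> wit g (h x) n n' ->
  exists M M', wit (g \o h) x M M' /\ wdiff M M' = wdiff m m' + wdiff n n'.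
Proof.
move=> hh hg.
have [m2 [hw2 hd2]] := wit_extend (n := (size m + size n)%N) hh (leq_addr _ _).
have hs : size m2 = (size m' + size n)%N.
  move: hd2; rewrite /wdiff size_ctake => e; lia.
have hp := wit_out hw2.
have hle : (size n <= size m2)%N by rewrite hs leq_addl.
have [n2 [hg2 hd3]] := wit_extend hg hle.
rewrite -(prefixC_take hp) in hg2 hd3.
exists (ctake (size m + size n) x), n2; split.
  split; first exact: hw2.1.
  by move=> y /=; rewrite hw2.2 hg2.2.
by rewrite -(wdiff_trans _ m2) hd3 hd2.
Qed.

Lemma wit_local h1 h2 x m m' m0 : wit h1 x m m' -> prefixC m0 x ->
  (forall y, prefixC m0 y -> h1 y = h2 y) ->
  exists M M', wit h2 x M M' /\ wdiff M M' = wdiff m m'.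
Proof.
move=> hw hp he.
have [m2 [hw2 hd2]] := wit_extend (n := (size m + size m0)%N) hw (leq_addr _ _).
exists (ctake (size m + size m0) x), m2; split => //.
split; first exact: ctake_prefix.
move=> y; rewrite -he ?hw2.2 //.
apply: prefixC_catC_le hp (ctake_prefix _ _) _.
by rewrite size_ctake leq_addl.
Qed.

Definition haswit h x := exists m m', wit h x m m'.
Definition cV (h : C -> C) := forall x, haswit h x.

Lemma logslope_chain g h x : haswit h x -> haswit g (h x) ->
  logslope (g \o h) x = logslope g (h x) + logslope h x.
Proof.
move=> [m [m' hh]] [n [n' hg]].
have [M [M' [hw hd]]] := wit_chain hh hg.
by rewrite (logslope_wit hw) (logslope_wit hh) (logslope_wit hg) hd addrC.
Qed.

Lemma haswit_chain g h x : haswit h x -> haswit g (h x) -> haswit (g \o h) x.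
Proof.
move=> [m [m' hh]] [n [n' hg]].
have [M [M' [hw hd]]] := wit_chain hh hg; by exists M, M'.
Qed.

Lemma cV_comp g h : cV g -> cV h -> cV (g \o h).
Proof. by move=> hg hh x; apply: haswit_chain. Qed.

Lemma logslope_local h1 h2 x m0 : haswit h1 x -> prefixC m0 x ->
  (forall y, prefixC m0 y -> h1 y = h2 y) -> logslope h2 x = logslope h1 x.
Proof.
move=> [m [m' hw]] hp he; have [M [M' [hw2 hd]]] := wit_local hw hp he.
by rewrite (logslope_wit hw2) (logslope_wit hw).
Qed.

Lemma logslope_id x : logslope id x = 0.
Proof.
have hw : wit id x [::] [::] by split => // i.
by rewrite (logslope_wit hw) /wdiff.
Qed.

Lemma haswit_id x : haswit id x.
Proof. by exists [::], [::]; split => // i. Qed.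

End M1.
Import M1.

Module M2.

Definition prefb (m : seq bool) (x : C) : bool :=
  all (fun i => x i == nth false m i) (iota 0 (size m)).

Lemma prefbP m x : reflect (prefixC m x) (prefb m x).
Proof.
apply: (iffP allP) => h.
  by move=> i hi; apply/eqP/h; rewrite mem_iota.
by move=> i; rewrite mem_iota => /andP[_ hi]; apply/eqP/h.
Qed.

Lemma part_find ms x k : is_partition ms -> (k < size ms)%N ->
  prefixC (nth [::] ms k) x -> find (prefb^~ x) ms = k.
Proof.
move=> hp hk hpk; have [k0 [[hk0 hp0] hu]] := hp x.
have hhas : has (prefb^~ x) ms.
  by apply/(has_nthP [::]); exists k => //; apply/prefbP.
have hf : (find (prefb^~ x) ms < size ms)%N by rewrite -has_find.
have hn := nth_find [::] hhas.
by rewrite -(hu _ (conj hk hpk)); symmetry; apply: hu; split => //; apply/prefbP.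
Qed.

Definition pv (ms ms' : seq (seq bool)) (x : C) : C :=
  let k := find (prefb^~ x) ms in
  catC (nth [::] ms' k) (cdrop (size (nth [::] ms k)) x).

Lemma pv_cat ms ms' k y : is_partition ms -> (k < size ms)%N ->
  pv ms ms' (catC (nth [::] ms k) y) = catC (nth [::] ms' k) y.
Proof.
move=> hp hk; rewrite /pv (part_find hp hk (prefixC_catC _ _)).
by rewrite cdrop_catC.
Qed.

Lemma part_dec ms x : is_partition ms ->
  exists k, (k < size ms)%N /\ x = catC (nth [::] ms k) (cdrop (size (nth [::] ms k)) x).
Proof.
move=> hp; have [k [[hk hpk] _]] := hp x; exists k; split => //.
exact: prefixC_eq.
Qed.

Lemma pv_K ms ms' : is_partition ms -> is_partition ms' -> size ms = size ms' ->
  cancel (pv ms ms') (pv ms' ms).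
Proof.
move=> hp hp' hs x; have [k [hk ->]] := part_dec x hp.
by rewrite pv_cat // pv_cat // -hs.
Qed.

Lemma pv_cont ms ms' : is_partition ms -> continuousC (pv ms ms').
Proof.
move=> hp x n; have [k [[hk hpk] _]] := hp x.
exists (size (nth [::] ms k) + n)%N => y hy i hi.
have hpy : prefixC (nth [::] ms k) y.
  move=> j hj; rewrite hy ?hpk //; exact: ltn_addr.
rewrite /pv (part_find hp hk hpk) (part_find hp hk hpy) /catC.
case: ifP => // _; rewrite /cdrop hy //.
rewrite ltn_add2l; apply: leq_ltn_trans hi; exact: leq_subr.
Qed.

Lemma pv_inV ms ms' : is_partition ms -> is_partition ms' -> size ms = size ms' ->
  inV (pv ms ms').
Proof.
move=> hp hp' hs; split.
  exists (pv ms' ms); split; first exact: pv_K.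
  split; first exact: pv_K.
  by split; apply: pv_cont.
exists ms, ms'; do 3 split => //.
by move=> k y hk; rewrite pv_cat.
Qed.

Lemma inV_cV v : inV v -> cV v.
Proof.
move=> [_ [ms [ms' [hs [hp [hp' he]]]]]] x.
have [k [[hk hpk] _]] := hp x; exists (nth [::] ms k), (nth [::] ms' k).
by split => // y; rewrite he.
Qed.

Lemma inV_inv v w : inV v -> cancel v w -> cancel w v -> inV w.
Proof.
move=> [[h' [c1 [c2 [cc1 cc2]]]] [ms [ms' [hs [hp [hp' he]]]]]] k1 k2.
have ew : w = h'.
  by apply: functional_extensionality => x; rewrite -{1}(c2 x) k1.
split.
  exists v; split; first exact: k2.
  split; first exact: k1.
  by rewrite ew; split.
exists ms', ms; do 3 split => //.
move=> k y hk; have hk' : (k < size ms)%N by rewrite hs.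
by rewrite -(he k y hk') k1.
Qed.

Lemma inV_ext v v' : inV v -> v =1 v' -> inV v'.
Proof. by move=> h e; have -> : v' = v by apply: functional_extensionality. Qed.

Lemma prefixC_cons b m x : prefixC (b :: m) x <-> x 0%N = b /\ prefixC m (cdrop 1 x).
Proof.
split.
  move=> h; split; first exact: (h 0%N).
  by move=> i hi; rewrite /cdrop (h i.+1).
move=> [h0 h] [|i] //= hi; exact: h.
Qed.

Lemma split_part b ms1 ms2 : is_partition ms1 -> is_partition ms2 ->
  is_partition (map (cons b) ms1 ++ map (cons (~~ b)) ms2).
Proof.
move=> hp1 hp2 x.
have nthL k : (k < size ms1)%N ->
  nth [::] (map (cons b) ms1 ++ map (cons (~~ b)) ms2) k = b :: nth [::] ms1 k.
  by move=> hk; rewrite nth_cat size_map hk (nth_map [::]).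
have nthR k : (size ms1 <= k)%N -> (k < size ms1 + size ms2)%N ->
  nth [::] (map (cons b) ms1 ++ map (cons (~~ b)) ms2) k =
   ~~ b :: nth [::] ms2 (k - size ms1).
  move=> hk hk2; rewrite nth_cat size_map ltnNge hk /= (nth_map [::]) //.
  by rewrite ltn_subLR.
rewrite size_cat !size_map.
case hb : (x 0%N == b).
  have [k [[hk hpk] hu]] := hp1 (cdrop 1 x).
  exists k; split.
    split; first exact: ltn_addr.
    by rewrite nthL //; apply/prefixC_cons; split => //; apply/eqP.
  move=> k' [hk' hp']; case: (ltnP k' (size ms1)) => hl.
    by apply: hu; move: hp'; rewrite nthL // => /prefixC_cons [].
  move: hp'; rewrite nthR // => /prefixC_cons [hx _].
  by move: hb; rewrite hx; case: (b) => /eqP.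
have hb' : x 0%N = ~~ b by move: hb; case: (b); case: (x 0%N).
have [k [[hk hpk] hu]] := hp2 (cdrop 1 x).
exists (size ms1 + k)%N; split.
  split; first by rewrite ltn_add2l.
  rewrite nthR ?leq_addr ?ltn_add2l // addKn.
  by apply/prefixC_cons.
move=> k' [hk' hp']; case: (ltnP k' (size ms1)) => hl.
  move: hp'; rewrite nthL // => /prefixC_cons [hx _].
  by move: hb'; rewrite hx; case: (b).
move: hp'; rewrite nthR // => /prefixC_cons [_ h].
have -> := hu (k' - size ms1)%N; first by rewrite subnKC.
by split => //; rewrite ltn_subLR.
Qed.

Lemma part_nil : is_partition [:: [::]].
Proof.
move=> x; exists 0%N; split; first by split => // i.
by move=> [|k] [].
Qed.

Fixpoint ppart (m : seq bool) : seq (seq bool) :=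
  match m with
  | [::] => [:: [::]]
  | b :: m' => map (cons b) (ppart m') ++ map (cons (~~ b)) [:: [::]]
  end.

Lemma ppart_part m : is_partition (ppart m).
Proof.
elim: m => [|b m IH]; first exact: part_nil.
exact: (split_part b IH part_nil).
Qed.

Lemma size_ppart m : size (ppart m) = (size m).+1.
Proof. by elim: m => //= b m IH; rewrite size_cat size_map IH addn1. Qed.

Lemma nth_ppart m : nth [::] (ppart m) 0 = m.
Proof.
elim: m => //= b m IH; rewrite nth_cat size_map size_ppart /=.
by rewrite (nth_map [::]) ?size_ppart // IH.
Qed.

Lemma catC_nseq0 n : catC (nseq n false) zeroC = zeroC.
Proof.
apply: functional_extensionality => i; rewrite /catC size_nseq nth_nseq.
by case: (i < n)%N.
Qed.

Lemma inQ2_eq (q : C) (K : nat) : (forall n, (K <= n)%N -> q n = false) ->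
  q = catC (ctake K q) zeroC.
Proof.
move=> h; apply: functional_extensionality => i; rewrite /catC size_ctake.
case: ltnP => hi; first by rewrite nth_mkseq.
exact: h.
Qed.

Lemma inQ2_catC m : inQ2 (catC m zeroC).
Proof.
exists (size m) => n hn; by rewrite /catC ltnNge hn.
Qed.

Lemma V_trans q : inQ2 q -> exists s, inV s /\ s zeroC = q.
Proof.
move=> [N hN].
exists (pv (ppart (nseq N false)) (ppart (ctake N q))); split.
  apply: pv_inV; try exact: ppart_part.
  by rewrite !size_ppart size_nseq size_ctake.
have e : zeroC = catC (nth [::] (ppart (nseq N false)) 0) zeroC.
  by rewrite nth_ppart catC_nseq0.
rewrite {1}e pv_cat.
- by rewrite nth_ppart -inQ2_eq.
- exact: ppart_part.
- by rewrite size_ppart.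
Qed.

Definition ms01 : seq (seq bool) := [:: [:: false]; [:: true]].
Definition t1ms : seq (seq bool) := [:: [:: false; false]; [:: false; true]; [:: true]].
Definition t1ms' : seq (seq bool) := [:: [:: false]; [:: true; false]; [:: true; true]].

Lemma ms01_part : is_partition ms01.
Proof. exact: (split_part false part_nil part_nil). Qed.

Lemma t1ms_part : is_partition t1ms.
Proof. exact: (split_part false ms01_part part_nil). Qed.

Lemma t1ms'_part : is_partition t1ms'.
Proof. exact: (split_part false part_nil ms01_part). Qed.

Definition t1 := pv t1ms t1ms'.
Definition t1i := pv t1ms' t1ms.

Lemma t1_inV : inV t1.
Proof. by apply: pv_inV; [exact: t1ms_part | exact: t1ms'_part |]. Qed.

Lemma t1i_inV : inV t1i.
Proof. by apply: pv_inV; [exact: t1ms'_part | exact: t1ms_part |]. Qed.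

Lemma t1K : cancel t1 t1i.
Proof. by apply: pv_K; [exact: t1ms_part | exact: t1ms'_part |]. Qed.

Lemma t1iK : cancel t1i t1.
Proof. by apply: pv_K; [exact: t1ms'_part | exact: t1ms_part |]. Qed.

Lemma zero_cat1 : catC [:: false] zeroC = zeroC.
Proof. exact: (catC_nseq0 1). Qed.

Lemma zero_cat2 : catC [:: false; false] zeroC = zeroC.
Proof. exact: (catC_nseq0 2). Qed.

Lemma t1_wit0 : wit t1 zeroC [:: false; false] [:: false].
Proof.
split; first by rewrite -zero_cat2; apply: prefixC_catC.
move=> y; exact: (@pv_cat t1ms t1ms' 0 y t1ms_part).
Qed.

Lemma t1i_wit0 : wit t1i zeroC [:: false] [:: false; false].
Proof.
split; first by rewrite -zero_cat1; apply: prefixC_catC.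
move=> y; exact: (@pv_cat t1ms' t1ms 0 y t1ms'_part).
Qed.

Lemma t1_zero : t1 zeroC = zeroC.
Proof. by rewrite -{1}zero_cat2 t1_wit0.2 zero_cat1. Qed.

Lemma t1i_zero : t1i zeroC = zeroC.
Proof. by rewrite -{1}zero_cat1 t1i_wit0.2 zero_cat2. Qed.

Local Open Scope ring_scope.

Lemma t1_slope : logslope t1 zeroC = 1.
Proof. by rewrite (logslope_wit t1_wit0). Qed.

Lemma t1i_slope : logslope t1i zeroC = -1.
Proof. by rewrite (logslope_wit t1i_wit0). Qed.

Local Close Scope ring_scope.

Lemma t1_bit0 z : z 0%N = true -> t1 z 0%N = true.
Proof.
move=> h; have e : z = catC (nth [::] t1ms 2) (cdrop 1 z).
  apply: prefixC_eq => -[|i] //=.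
by rewrite e /t1 pv_cat //; exact: t1ms_part.
Qed.

Lemma t1_bit1 z : z 0%N = false -> z 1%N = true -> t1 z 0%N = true.
Proof.
move=> h0 h1; have e : z = catC (nth [::] t1ms 1) (cdrop 2 z).
  apply: prefixC_eq => -[|[|i]] //=.
by rewrite e /t1 pv_cat //; exact: t1ms_part.
Qed.

Lemma t1_bit00 z : z 0%N = false -> z 1%N = false -> t1 z = cdrop 1 z.
Proof.
move=> h0 h1; have e : z = catC (nth [::] t1ms 0) (cdrop 2 z).
  apply: prefixC_eq => -[|[|i]] //=.
rewrite {1}e /t1 pv_cat //; last exact: t1ms_part.
apply: functional_extensionality => -[|i] /=; first by rewrite /cdrop /= h1.
by rewrite /catC /= /cdrop subn1 /=.
Qed.

Lemma t1_iter_bit0 z n : z 0%N = true -> iter n t1 z 0%N = true.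
Proof.
move=> h; elim: n => //= n IH; exact: t1_bit0.
Qed.

Lemma t1_dyn j z : z j = true -> (forall i, (i < j)%N -> z i = false) ->
  forall n, (j <= n)%N -> iter n t1 z 0%N = true.
Proof.
elim: j z => [|j IH] z hj hlt n hn.
  exact: t1_iter_bit0.
case: n hn => // n hn; rewrite iterSr.
case: j IH hj hlt hn => [|j] IH hj hlt hn.
  by apply: t1_iter_bit0; apply: t1_bit1 => //; apply: hlt.
rewrite t1_bit00; try by apply: hlt.
apply: IH => // i hi; rewrite /cdrop add1n; exact: hlt.
Qed.

End M2.
Import M2.

Module M3.

Lemma zero_inQ2 : inQ2 zeroC.
Proof. by exists 0%N. Qed.

Lemma prefix_zero m : prefixC m zeroC -> m = nseq (size m) false.
Proof.
move=> h; apply: (@eq_from_nth _ false); rewrite ?size_nseq // => i hi.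
by rewrite -h // nth_nseq hi.
Qed.

Section Stab.
Variable p : homeo.
Hypothesis hp : inStabN p.

Local Notation ph := (hfun p).
Local Notation phi := (hinv p).
Local Notation q := (hinv p zeroC).

Lemma conjV v : inV v -> inV (phi \o v \o ph).
Proof.
move=> hv; have [v' [hv' e]] := hp.2.1 v hv.
apply: (inV_ext hv') => x /=; by rewrite e /= hfunK hfunK.
Qed.

Lemma conjV' v : inV v -> inV (ph \o v \o phi).
Proof. exact: hp.1. Qed.

Lemma Q2_ph x : inQ2 x -> inQ2 (ph x).
Proof. exact: hp.2.2.1. Qed.

Lemma Q2_phi x : inQ2 x -> inQ2 (phi x).
Proof.
move=> hx; have [x' [hx' e]] := hp.2.2.2 x hx; by rewrite -e hfunK.
Qed.

Lemma q_inQ2 : inQ2 q.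
Proof. exact: Q2_phi zero_inQ2. Qed.

Definition good g := cV g /\ cV (phi \o g \o ph).

Lemma good_V v : inV v -> good v.
Proof. by move=> hv; split; apply: inV_cV => //; apply: conjV. Qed.

Lemma conj_comp g h : phi \o (g \o h) \o ph = (phi \o g \o ph) \o (phi \o h \o ph).
Proof. by apply: functional_extensionality => x /=; rewrite hinvK. Qed.

Lemma good_comp g h : good g -> good h -> good (g \o h).
Proof.
move=> [h1 h2] [h3 h4]; split; first exact: cV_comp.
by rewrite conj_comp; apply: cV_comp.
Qed.

Definition kappa g := logslope (phi \o g \o ph) q.

Lemma germ0 g : haswit g zeroC -> g zeroC = zeroC ->
  exists a b : nat, (a%:Z - b%:Z = logslope g zeroC)%R /\
    forall y, g (catC (nseq a false) y) = catC (nseq b false) y.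
Proof.
move=> [m [m' hw]] g0; exists (size m), (size m'); split.
  by rewrite (logslope_wit hw).
have hm := prefix_zero hw.1.
have hm' : prefixC m' zeroC by rewrite -g0; apply: wit_out hw.
by move=> y; rewrite -hm -(prefix_zero hm') hw.2.
Qed.

Lemma catC_nseqD a b y :
  catC (nseq (a + b) false) y = catC (nseq a false) (catC (nseq b false) y).
Proof. by rewrite nseqD catC_cat. Qed.

Lemma germ_eq g1 g2 : haswit g1 zeroC -> g1 zeroC = zeroC ->
  haswit g2 zeroC -> g2 zeroC = zeroC -> logslope g1 zeroC = logslope g2 zeroC ->
  exists n, forall y, g1 (catC (nseq n false) y) = g2 (catC (nseq n false) y).
Proof.
move=> w1 f1 w2 f2 e.
have [a1 [b1 [e1 h1]]] := germ0 w1 f1.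
have [a2 [b2 [e2 h2]]] := germ0 w2 f2.
exists (a1 + a2)%N => y.
rewrite [in LHS]catC_nseqD h1 -catC_nseqD [in RHS]addnC [in RHS]catC_nseqD h2 -catC_nseqD.
have -> : (b1 + a2 = b2 + a1)%N by move: e; rewrite -e1 -e2; lia.
by [].
Qed.

Lemma agree_prefix (x y : C) M : (forall i, (i < M)%N -> y i = x i) ->
  prefixC (ctake M x) y.
Proof.
move=> h i; rewrite size_ctake => hi; by rewrite nth_mkseq // h.
Qed.

Lemma prefix_agree (x y : C) M : prefixC (ctake M x) y ->
  forall i, (i < M)%N -> y i = x i.
Proof.
move=> h i hi; have := h i; rewrite size_ctake nth_mkseq //; by apply.
Qed.

Lemma kappa_germ g1 g2 : good g1 -> good g2 -> g1 zeroC = zeroC -> g2 zeroC = zeroC ->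
  logslope g1 zeroC = logslope g2 zeroC -> kappa g1 = kappa g2.
Proof.
move=> [c1 c1'] [c2 c2'] f1 f2 e.
have [n hn] := germ_eq (c1 zeroC) f1 (c2 zeroC) f2 e.
have [M hM] := hfun_cont p q n.
rewrite /kappa; symmetry; apply: (logslope_local (m0 := ctake M q)) => //.
  exact: ctake_prefix.
move=> y hy /=.
have ey : ph y = catC (nseq n false) (cdrop n (ph y)).
  have hpre : prefixC (nseq n false) (ph y).
    move=> i; rewrite size_nseq => hi; rewrite nth_nseq hi.
    rewrite (hM y (prefix_agree hy) i hi) hinvK //.
  by have := prefixC_eq hpre; rewrite size_nseq.
by rewrite ey hn.
Qed.

Local Open Scope ring_scope.

Lemma kappa_comp g h : good g -> good h -> h zeroC = zeroC ->
  kappa (g \o h) = kappa g + kappa h.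
Proof.
move=> [c1 c1'] [c2 c2'] f; rewrite /kappa conj_comp logslope_chain //.
by rewrite /= hinvK f.
Qed.

Lemma slope_comp g h : good g -> good h -> h zeroC = zeroC ->
  logslope (g \o h) zeroC = logslope g zeroC + logslope h zeroC.
Proof.
move=> [c1 c1'] [c2 c2'] f; rewrite logslope_chain //; by rewrite f.
Qed.

Definition cst := kappa t1.

Lemma good_iter f n : good f -> good (iter n f).
Proof.
move=> gf; elim: n => [|n IH] /=.
  by split => x; [apply: haswit_id | have -> : phi \o id \o ph = id;
    [apply: functional_extensionality => y /=; rewrite hfunK | apply: haswit_id]].
exact: (good_comp gf IH).
Qed.

Lemma iter_fix f n : f zeroC = zeroC -> iter n f zeroC = zeroC.
Proof. by move=> h; elim: n => //= n ->. Qed.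

Lemma kappa_id : kappa id = 0.
Proof.
rewrite /kappa; have -> : phi \o id \o ph = id.
  by apply: functional_extensionality => y /=; rewrite hfunK.
exact: logslope_id.
Qed.

Lemma kappa_iter f n : good f -> f zeroC = zeroC ->
  kappa (iter n f) = n%:Z * kappa f /\ logslope (iter n f) zeroC = n%:Z * logslope f zeroC.
Proof.
move=> gf f0; elim: n => [|n [IH1 IH2]].
  by rewrite /= kappa_id logslope_id !mul0r.
have e : iter n.+1 f = f \o iter n f by [].
have gi := good_iter n gf; have fi := iter_fix n f0.
rewrite e (kappa_comp gf gi fi) (slope_comp gf gi fi) IH1 IH2.
by split; rewrite -[n.+1]addn1 PoszD mulrDl mul1r addrC.
Qed.

Lemma good_t1 : good t1. Proof. exact: (good_V t1_inV). Qed.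
Lemma good_t1i : good t1i. Proof. exact: (good_V t1i_inV). Qed.

Lemma kappa_t1i : kappa t1i = - cst.
Proof.
have e : kappa (t1 \o t1i) = 0.
  have -> : t1 \o t1i = id by apply: functional_extensionality => y /=; rewrite t1iK.
  exact: kappa_id.
rewrite (kappa_comp good_t1 good_t1i t1i_zero) in e.
by rewrite /cst; apply/eqP; rewrite -addr_eq0 addrC e.
Qed.

Lemma kappa_lin g : good g -> g zeroC = zeroC ->
  kappa g = logslope g zeroC * cst.
Proof.
move=> gg g0; case: (ltP (logslope g zeroC) 0) => hs.
  set n := `|logslope g zeroC|%N.
  have hn : n%:Z = - logslope g zeroC by rewrite abszE ltr0_norm.
  have [k1 k2] := kappa_iter n good_t1i t1i_zero.
  have gi := good_iter n good_t1i; have fi := iter_fix n t1i_zero.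
  have es : logslope g zeroC = logslope (iter n t1i) zeroC.
    by rewrite k2 t1i_slope hn mulrN1 opprK.
  rewrite (kappa_germ gg gi g0 fi es) k1 kappa_t1i hn.
  by rewrite mulrNN.
set n := `|logslope g zeroC|%N.
have hn : n%:Z = logslope g zeroC by rewrite abszE ger0_norm.
have [k1 k2] := kappa_iter n good_t1 t1_zero.
have gi := good_iter n good_t1; have fi := iter_fix n t1_zero.
have es : logslope g zeroC = logslope (iter n t1) zeroC.
  by rewrite k2 t1_slope hn mulr1.
by rewrite (kappa_germ gg gi g0 fi es) k1 hn.
Qed.

Lemma cst_pm : cst = 1 \/ cst = -1.
Proof.
have [s [hs s0]] := V_trans q_inQ2.
have [si [k1 [k2 _]]] := hs.1.
have hsi : inV si := inV_inv hs k1 k2.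
set rho := s \o (t1 \o si).
have siq : si q = zeroC by rewrite -s0 k1.
have cs := inV_cV hs; have csi := inV_cV hsi; have ct := inV_cV t1_inV.
have crho : cV rho by apply: cV_comp => //; apply: cV_comp.
have rq : rho q = q by rewrite /rho /= siq t1_zero s0.
have ls0 : logslope s zeroC + logslope si q = 0.
  have e : s \o si = id by apply: functional_extensionality => y /=; rewrite k2.
  have := logslope_chain (csi q) (cs (si q)); rewrite e logslope_id siq => <-.
  by [].
have lrho : logslope rho q = 1.
  rewrite /rho logslope_chain //; last first.
    by apply: haswit_chain => //.
  rewrite logslope_chain // /= siq t1_zero t1_slope.
  by rewrite addrA addrC addrA (addrC _ (logslope s zeroC)) ls0 add0r.
set g := ph \o rho \o phi.
have eg : g = (ph \o s \o phi) \o ((ph \o t1 \o phi) \o (ph \o si \o phi)).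
  by apply: functional_extensionality => y /=; rewrite !hfunK.
have cg : cV g.
  rewrite eg; apply: cV_comp; first exact: inV_cV (conjV' hs).
  apply: cV_comp; apply: inV_cV; apply: conjV'; [exact: t1_inV | exact: hsi].
have er : phi \o g \o ph = rho.
  by apply: functional_extensionality => y /=; rewrite !hfunK.
have gg : good g by split => //; rewrite er.
have g0 : g zeroC = zeroC by rewrite /g /= rq hinvK.
have := kappa_lin gg g0; rewrite /kappa er lrho => e.
have := @intUnitRing.unitzPl cst (logslope g zeroC) (esym e).
by rewrite qualifE => /orP[/eqP -> | /eqP ->]; [left | right].
Qed.

Lemma cst_neq : cst <> -1.
Proof.
move=> hc.
set psi := phi \o t1 \o ph.
have ct : cV psi := inV_cV (conjV t1_inV).
have pq : psi q = q by rewrite /psi /= hinvK t1_zero.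
have [m [m' hw]] := ct q.
have hd : logslope psi q = -1 by rewrite -hc.
rewrite (logslope_wit hw) /wdiff in hd.
have hsz : size m' = (size m).+1 by lia.
have hm' : prefixC m' q by rewrite -pq; apply: wit_out hw.
have hl : (size m <= size m')%N by rewrite hsz.
have em := prefixC_le hw.1 hm' hl.
set r := drop (size m) m' in em.
have hr : size r = 1%N by rewrite size_drop hsz subSn // subnn.
case: r em hr => [|b [|]] // em _.
have eq := prefixC_eq hw.1.
set d := cdrop (size m) q in eq.
have eq2 : q = catC (m ++ [:: b]) d by rewrite -em -hw.2 -eq pq.
have hb : forall i, q (size m + i)%N = b.
  elim=> [|i IH].
    by rewrite eq2 /catC size_cat addn0 /= addn1 ltnSn nth_cat ltnn subnn.
  have e1 : q (size m + i.+1)%N = d i.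
    rewrite [in LHS]eq2 /catC size_cat /= ifF; last first.
      by apply/negbTE; rewrite -leqNgt addn1 addnS ltnS leq_addr.
    by congr d; lia.
  by rewrite e1 /d /cdrop.
have b0 : b = false.
  have [N hN] := q_inQ2; rewrite -(hb N) hN //; exact: leq_addl.
have dz : d = zeroC.
  by apply: functional_extensionality => i; rewrite /d /cdrop hb b0.
rewrite dz in eq; rewrite b0 in em.
have hpsi : forall y, psi (catC m y) = catC m (catC [:: false] y).
  by move=> y; rewrite hw.2 em catC_cat.
have hit : forall n y, iter n psi (catC m y) = catC m (catC (nseq n false) y).
  elim=> [|n IH] y /=.
    by congr catC; apply: functional_extensionality => i; rewrite /catC /= subn0.
  by rewrite IH hpsi -[catC [:: false] _]catC_cat.
have hconj : forall n z, iter n t1 (ph z) = ph (iter n psi z).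
  elim=> [|n IH] z //=; by rewrite IH /psi /= hinvK.
set z := catC m (catC [:: true] zeroC).
have hz : exists j, ph z j = true.
  case: (excluded_middle_informative (exists j, ph z j = true)) => // hn.
  exfalso; have e0 : ph z = zeroC.
    apply: functional_extensionality => j; case e1: (ph z j) => //.
    by exfalso; apply: hn; exists j.
  have ezq : z = q by rewrite -e0 hfunK.
  have := congr1 (fun f => f (size m)) ezq.
  by rewrite /= eq /z /catC !ltnn subnn.
have hz' : exists j, (fun j => ph z j) j by [].
case: (ex_minnP hz') => j hj hmin.
have hlt : forall i, (i < j)%N -> ph z i = false.
  move=> i hi; apply/negbTE/negP => hpi.
  by have := hmin i hpi; rewrite leqNgt hi.
have [M hM] := hfun_cont p q 1.
have := t1_dyn hj hlt (leq_addr M j); rewrite hconj hit.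
set y := catC m (catC (nseq (j + M) false) (catC [:: true] zeroC)).
have agree : forall i, (i < M)%N -> y i = q i.
  move=> i hi; rewrite eq /y /catC; case: ltnP => // him.
  have hlt2 : (i - size m < j + M)%N.
    by apply: leq_ltn_trans (leq_subr _ _) _; apply: ltn_addl.
  by rewrite size_nseq hlt2 nth_nseq hlt2.
have hy : ph y 0%N = false by rewrite (hM y agree 0%N) // hinvK.
by rewrite hy.
Qed.

Lemma cst1 : cst = 1.
Proof. by case: cst_pm => // /cst_neq. Qed.

Lemma key g : good g -> g zeroC = zeroC -> kappa g = logslope g zeroC.
Proof. by move=> gg g0; rewrite kappa_lin // cst1 mulr1. Qed.

End Stab.

End M3.
Import M3.

Module M4.

Local Open Scope ring_scope.

Lemma two_neq0 : (2%:R : rat) != 0. Proof. by []. Qed.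

Lemma odd_neq0 (b : int) : odd `|b|%N -> (b%:~R : rat) != 0.
Proof. by move=> h; rewrite intr_eq0; apply/eqP => e; move: h; rewrite e. Qed.

Lemma nu_unique (k k' a b a' b' : int) : odd `|a|%N -> odd `|b|%N ->
  odd `|a'|%N -> odd `|b'|%N ->
  (2%:R ^ k * a%:~R / b%:~R = 2%:R ^ k' * a'%:~R / b'%:~R :> rat) -> k = k'.
Proof.
wlog: k k' a b a' b' / k <= k'.
  move=> W ha hb ha' hb' e; case: (lerP k k') => hk; first exact: (W k k' a b a' b' hk ha hb ha' hb' e).
  by symmetry; apply: (W k' k a' b' a b (ltW hk) ha' hb' ha hb); rewrite e.
move=> hk ha hb ha' hb' e.
set n := `|k' - k|%N.
have hn : k' = k + n%:Z by rewrite /n; lia.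
rewrite hn expfzDr // -exprnP in e.
have nb := odd_neq0 hb; have nb' := odd_neq0 hb'.
have e1 : (a * b')%:~R = (2 ^+ n * a' * b)%:~R :> rat.
  have h2k : (2%:R : rat) ^ k != 0 by apply: expfz_neq0.
  apply: (mulfI h2k); rewrite !intrM rmorphXn /=.
  have E1 : (2%:R : rat) ^ k * (a%:~R * b'%:~R) =
    (2%:R ^ k * a%:~R / b%:~R) * b%:~R * b'%:~R by field.
  have E2 : (2%:R : rat) ^ k * ((2%:~R) ^+ n * a'%:~R * b%:~R) =
    (2%:R ^ k * 2%:R ^+ n * a'%:~R / b'%:~R) * b%:~R * b'%:~R by field.
  by rewrite E1 E2 e.
have e2 := intr_inj e1.
have := congr1 (fun z => odd `|z|%N) e2; rewrite /= !abszM !oddM ha hb' abszX /=.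
case: n {e e1 e2} hn => [|n] hn.
  by rewrite hn addr0.
by rewrite expnS oddM.
Qed.

Definition dsum (x : C) (N : nat) : rat :=
  \sum_(i < N) (nat_of_bool (x i))%:R / 2%:R ^+ i.+1.

Lemma dsum_ext x N N' : (forall n, (N <= n)%N -> x n = false) -> (N <= N')%N ->
  dsum x N' = dsum x N.
Proof.
move=> h hl; rewrite /dsum -(subnKC hl) big_split_ord /=.
rewrite [X in _ + X]big1 ?addr0 // => i _; rewrite h ?mul0r //; exact: leq_addr.
Qed.

Lemma dyval_eq x N : (forall n, (N <= n)%N -> x n = false) -> dyval x = dsum x N.
Proof.
move=> hN; rewrite /dyval.
match goal with |- epsilon ?i ?P = _ => have : exists r, P r end.
  by exists (dsum x N), N.
move=> /epsilon_spec H; have [N' [hN' ->]] := H (inhabits 0).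
case: (leqP N N') => hl; first exact: dsum_ext.
by symmetry; apply: dsum_ext => //; apply: ltnW.
Qed.

Lemma nu_spec (r : rat) (k : int) (a b : int) : odd `|a|%N -> odd `|b|%N ->
  r = 2%:R ^ k * a%:~R / b%:~R -> nu r = k.
Proof.
move=> ha hb hr; rewrite /nu.
match goal with |- epsilon ?i ?P = _ => have : exists r, P r end.
  by exists k; right; exists a, b.
move=> /epsilon_spec H; have [[r0 _]|[a' [b' [ha' [hb' e]]]]] := H (inhabits 0).
  exfalso; move: hr; rewrite r0 => /esym /eqP; rewrite mulf_eq0 invr_eq0.
  rewrite mulf_eq0 (negbTE (expfz_neq0 _ two_neq0)) (negbTE (odd_neq0 ha)).
  by rewrite (negbTE (odd_neq0 hb)).
by apply: (nu_unique ha' hb' ha hb); rewrite -e.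
Qed.

Lemma dsum_last x L : x L = true ->
  exists P : nat, odd P /\ dsum x L.+1 = P%:R / 2%:R ^+ L.+1.
Proof.
move=> hL; exists (\sum_(i < L.+1) nat_of_bool (x i) * 2 ^ (L - i))%N; split.
  rewrite big_ord_recr /= hL subnn expn0 muln1 oddD.
  have -> : odd (\sum_(i < L) x i * 2 ^ (L - i)) = false.
    apply/negbTE; rewrite -dvdn2; apply: dvdn_sum => i _.
    apply: dvdn_mull; have hi : (0 < L - i)%N by rewrite subn_gt0.
    by rewrite -(prednK hi) expnS dvdn_mulr.
  by [].
rewrite /dsum natr_sum mulr_suml; apply: eq_bigr => i _.
rewrite natrM natrX.
have -> : (2%:R : rat) ^+ L.+1 = 2%:R ^+ (L - i) * 2%:R ^+ i.+1.
  by rewrite -exprD addnS subnK // -ltnS.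
rewrite invfM mulrA -(mulrA _ (2%:R ^+ (L - i))) mulfV ?mulr1 //.
by apply: expf_neq0.
Qed.

Lemma nu_dyval x L : x L = true -> (forall i, (L < i)%N -> x i = false) ->
  nu (dyval x) = - (L.+1)%:Z.
Proof.
move=> hL hgt; rewrite (dyval_eq (N := L.+1)) //.
have [P [hP ->]] := dsum_last hL.
apply: (nu_spec (a := P%:Z) (b := 1)) => //.
by rewrite -exprnN exprnP rmorph1 divr1 mulrC.
Qed.

Lemma last_one y N : (forall n, (N <= n)%N -> y n = false) -> (exists j, y j = true) ->
  exists L, y L = true /\ forall i, (L < i)%N -> y i = false.
Proof.
elim: N => [|N IH] hN hj.
  by exfalso; case: hj => j; rewrite hN.
case e: (y N).
  by exists N; split => // i hi; apply: hN.
apply: IH => // n; rewrite leq_eqVlt => /orP[/eqP <- // | ]; exact: hN.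
Qed.

Lemma catC_last m y L : y L = true -> (forall i, (L < i)%N -> y i = false) ->
  catC m y (size m + L)%N = true /\
  forall i, (size m + L < i)%N -> catC m y i = false.
Proof.
move=> hL hgt; split.
  by rewrite /catC ltnNge leq_addr /= addKn.
move=> i hi; rewrite /catC ifF.
  apply: hgt; rewrite ltn_subRL //.
apply/negbTE; rewrite -leqNgt; apply: (leq_trans (leq_addr L _)).
exact: ltnW.
Qed.

Lemma nu_catC m y L : y L = true -> (forall i, (L < i)%N -> y i = false) ->
  nu (dyval (catC m y)) = - (size m + L).+1%:Z.
Proof. by move=> hL hgt; have [h1 h2] := catC_last m hL hgt; apply: nu_dyval. Qed.

Lemma In_nth (T : Type) (d : T) (s : seq T) k : (k < size s)%N -> List.In (nth d s k) s.
Proof.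
elim: s k => [|a s IH] [|k] //= hk; [by left | right; exact: IH].
Qed.

Lemma In_map_nth (T U : Type) (f : T -> U) (d : T) (s : seq T) k :
  (k < size s)%N -> List.In (f (nth d s k)) (map f s).
Proof.
elim: s k => [|a s IH] [|k] //= hk; [by left | right; exact: IH].
Qed.

Lemma inQ2_cdrop n x : inQ2 x -> inQ2 (cdrop n x).
Proof. by move=> [N hN]; exists N => i hi; rewrite /cdrop hN // (leq_trans hi (leq_addl _ _)). Qed.

Lemma inQ2_catC' m y : inQ2 y -> inQ2 (catC m y).
Proof.
move=> [N hN]; exists (size m + N)%N => i hi; rewrite /catC ifF.
  by apply: hN; rewrite leq_subRL // (leq_trans (leq_addr N _) hi).
by apply/negbTE; rewrite -leqNgt (leq_trans (leq_addr N _) hi).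
Qed.

Lemma inV_Q2 v x : inV v -> inQ2 x -> inQ2 (v x).
Proof.
move=> [_ [ms [ms' [hs [hp [hp' he]]]]]] hx.
have [k [hk e]] := part_dec x hp; rewrite e he //.
exact: inQ2_catC' (inQ2_cdrop _ hx).
Qed.

Lemma NU h : inV h -> exists E : seq C, forall x, inQ2 x -> ~ List.In x E ->
  nu (dyval (h x)) - nu (dyval x) = logslope h x.
Proof.
move=> [hh [ms [ms' [hs [hp [hp' he]]]]]].
exists (map (fun m => catC m zeroC) ms) => x hx hnin.
have [k [hk e]] := part_dec x hp.
set y := cdrop (size (nth [::] ms k)) x in e.
have hy : inQ2 y := inQ2_cdrop _ hx.
have [j hj] : exists j, y j = true.
  case: (excluded_middle_informative (exists j, y j = true)) => // hn.
  exfalso; apply: hnin; rewrite e.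
  have -> : y = zeroC.
    apply: functional_extensionality => j; case e1: (y j) => //.
    by exfalso; apply: hn; exists j.
  exact: In_map_nth.
have [N hN] := hy.
have [L [hL hgt]] := last_one hN (ex_intro _ j hj).
have hw : wit h x (nth [::] ms k) (nth [::] ms' k).
  by split; [rewrite e; apply: prefixC_catC | move=> z; apply: he].
rewrite (logslope_wit hw) e he // !(nu_catC _ hL hgt) /wdiff.
Show. lia.
Qed.

End M4.
Import M4.

Module M5.

Local Open Scope ring_scope.

Lemma inV_homeo_inv v : inV v -> exists w, cancel v w /\ cancel w v /\ inV w.
Proof.
move=> hv; have [w [k1 [k2 _]]] := hv.1; exists w; do 2 split => //.
exact: inV_inv hv k1 k2.
Qed.

Lemma vx_spec x : inQ2 x ->
  let v := epsilon (inhabits id) (fun v : C -> C => inV v /\ v zeroC = x) in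
  inV v /\ v zeroC = x.
Proof.
move=> hx /=; apply: (epsilon_spec (inhabits id) (fun v : C -> C => inV v /\ v zeroC = x)).
exact: V_trans.
Qed.

Lemma in_map_seq (T U : Type) (f : T -> U) a (s : seq T) :
  List.In a s -> List.In (f a) (map f s).
Proof. elim: s => //= b s IH [->|h]; [by left | right; exact: IH]. Qed.

Section Mu.
Variable p : homeo.
Hypothesis hp : inStabN p.

Local Notation ph := (hfun p).
Local Notation phi := (hinv p).

Lemma indep v v' : inV v -> good p v' -> v zeroC = v' zeroC ->
  kappa p v - logslope v zeroC = kappa p v' - logslope v' zeroC.
Proof.
move=> hv gv' e.
have [vi [k1 [k2 hvi]]] := inV_homeo_inv hv.
set u := vi \o v'.
have gu : good p u := good_comp (good_V hp hvi) gv'.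
have u0 : u zeroC = zeroC by rewrite /u /= -e k1.
have ev : v' = v \o u.
  by apply: functional_extensionality => y; rewrite /u /= k2.
have gv := good_V hp hv.
rewrite ev (kappa_comp gv gu u0) (slope_comp gv gu u0) (key hp gu u0).
by rewrite opprD addrACA subrr addr0.
Qed.

Lemma mu_eq x v' : inQ2 x -> good p v' -> v' zeroC = x ->
  mu p x = kappa p v' - logslope v' zeroC - nu (dyval (phi x)) + nu (dyval x).
Proof.
move=> hx gv' e; rewrite /mu.
have [hv hv0] := vx_spec hx.
set v := epsilon _ _ in hv hv0 *.
have := indep hv gv' (etrans hv0 (esym e)).
by rewrite /kappa => ->.
Qed.

Lemma AI_mu v w : inV v -> cancel v w -> cancel w v ->
  exists l : seq C, forall x, inQ2 x -> mu p x <> mu p (w x) -> List.In x l.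
Proof.
move=> hv k1 k2.
have hw : inV w := inV_inv hv k1 k2.
have hW : inV (phi \o w \o ph) := conjV hp hw.
have [E1 hE1] := NU hw.
have [E2 hE2] := NU hW.
exists (E1 ++ map ph E2) => x hx hne.
apply: List.in_or_app.
case: (excluded_middle_informative (List.In x E1)) => h1; first by left.
case: (excluded_middle_informative (List.In (phi x) E2)) => h2.
  by right; rewrite -[x](hinvK p); apply: in_map_seq.
exfalso; apply: hne.
have [hv' hv0] := vx_spec hx.
set vx := epsilon _ _ in hv' hv0.
have gvx := good_V hp hv'.
have gwv : good p (w \o vx) := good_comp (good_V hp hw) gvx.
have hwx : inQ2 (w x) := inV_Q2 hw hx.
have ewv : (w \o vx) zeroC = w x by rewrite /= hv0.
rewrite (mu_eq hx gvx hv0) (mu_eq hwx gwv ewv).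
have hphix : inQ2 (phi x) := Q2_phi hp hx.
have e1 := hE1 x hx h1.
have e2 := hE2 (phi x) hphix h2.
have eW : (phi \o w \o ph) (phi x) = phi (w x) by rewrite /= hinvK.
rewrite eW in e2.
have c1 := inV_cV (conjV hp hv') (phi zeroC).
have c2 := inV_cV hW ((phi \o vx \o ph) (phi zeroC)).
have c3 := inV_cV hv' zeroC.
have c4 := inV_cV hw (vx zeroC).
rewrite /kappa conj_comp (logslope_chain c1 c2) (logslope_chain c3 c4).
have -> : (phi \o vx \o ph) (phi zeroC) = phi x by rewrite /= hinvK hv0.
rewrite hv0 -e1 -e2.
lia.
Qed.

End Mu.

End M5.
Import M5.

Module M6.

Local Open Scope group_scope.

Section GroupFacts.
Variable G : groupType.
Implicit Types g h z : G.

Lemma gpowz0 g : gpowz g 0 = 1. Proof. by []. Qed.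

Lemma gpowz1 n : gpowz (1 : G) n = 1.
Proof. by case: n => k /=; rewrite expg1n ?invg1. Qed.

Lemma commute_XX g m n : commute (g ^+ m) (g ^+ n).
Proof. by rewrite /commute -!expgnDr addnC. Qed.

Lemma gpowzS g n : gpowz g (n + 1)%R = gpowz g n * g.
Proof.
case: n => [k|[|k]].
- have -> : (Posz k + 1)%R = Posz k.+1 by rewrite -addn1.
  by rewrite /= expgSr.
- have -> : (Negz 0 + 1)%R = 0%R by [].
  by rewrite /= mulVg.
- have -> : (Negz k.+1 + 1)%R = Negz k by rewrite !NegzE; lia.
  rewrite /= [g ^+ k.+2]expgSr invgM.
  have c : commute g (g ^+ k.+1)^-1 by apply: commuteV; apply: commuteX; apply: commute_refl.
  by rewrite -mulgA -c mulKg.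
Qed.

Lemma gpowzP g n : gpowz g (n - 1)%R = gpowz g n * g^-1.
Proof. by rewrite -[in RHS](GRing.subrK 1%R n) gpowzS mulgK. Qed.

Lemma gpowzD g m n : gpowz g (m + n)%R = gpowz g m * gpowz g n.
Proof.
case: n => k.
  elim: k => [|k IH]; first by rewrite GRing.addr0 mulg1.
  have -> : Posz k.+1 = (Posz k + 1)%R by rewrite -addn1.
  by rewrite GRing.addrA !gpowzS IH mulgA.
elim: k => [|k IH].
  have -> : Negz 0 = (0 - 1)%R by [].
  by rewrite GRing.addrA GRing.addr0 !gpowzP mul1g.
have -> : Negz k.+1 = (Negz k - 1)%R by rewrite !NegzE; lia.
by rewrite GRing.addrA !gpowzP IH mulgA.
Qed.

Lemma gpowzN g n : gpowz g (- n)%R = (gpowz g n)^-1.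
Proof.
apply: (mulgI (gpowz g n)); rewrite mulgV -gpowzD GRing.subrr //.
Qed.

Lemma central_pow z n : central z -> central (gpowz z n).
Proof.
move=> hz g; case: n => k /=.
  elim: k => [|k IH]; first by rewrite mul1g mulg1.
  by rewrite expgS -mulgA IH !mulgA hz.
have hk : central (z ^+ k.+1).
  elim: k.+1 => [|j IH] h; first by rewrite mul1g mulg1.
  by rewrite expgS -mulgA IH !mulgA hz.
move=> {hz}; apply: (mulgI (z ^+ k.+1)); rewrite mulgA mulgV mul1g.
by rewrite !mulgA hk -mulgA mulgV mulg1.
Qed.

Lemma central_inv z : central z -> central z^-1.
Proof.
move=> hz g; apply: (mulgI z); rewrite mulgA mulgV mul1g.
by rewrite mulgA hz -mulgA mulgV mulg1.
Qed.

Lemma central_mul z1 z2 : central z1 -> central z2 -> central (z1 * z2).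
Proof.
move=> h1 h2 g.
by rewrite -(mulgA z1 z2 g) (h2 g) (mulgA z1 g z2) (h1 g) (mulgA g z1 z2).
Qed.

Lemma gpowz_mul z1 z2 n : central z1 -> gpowz (z1 * z2) n = gpowz z1 n * gpowz z2 n.
Proof.
move=> h1; have c : commute z1 z2 by apply: h1.
case: n => k /=; first by rewrite expgMn.
by rewrite expgMn // invgM; symmetry; apply: central_inv; exact: (central_pow (Posz k.+1) h1).
Qed.

Section Morph.
Variable b : G -> G.
Hypothesis hb : is_aut b.

Lemma aut1 : b 1 = 1.
Proof.
apply: (mulgI (b 1)); by rewrite -hb.1 !mulg1.
Qed.

Lemma autV g : b g^-1 = (b g)^-1.
Proof.
apply: (mulgI (b g)); by rewrite -hb.1 !mulgV aut1.
Qed.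

Lemma aut_inj : injective b.
Proof. by have [bi k1 k2] := hb.2; apply: can_inj k1. Qed.

Lemma aut_pow g n : b (gpowz g n) = gpowz (b g) n.
Proof.
have hX : forall k, b (g ^+ k) = b g ^+ k.
  elim=> [|k IH]; first exact: aut1.
  by rewrite !expgS hb.1 IH.
by case: n => k /=; rewrite ?autV hX.
Qed.

Lemma aut_central z : central z -> central (b z).
Proof.
move=> hz g; have [bi k1 k2] := hb.2.
by rewrite -(k2 g) -!hb.1 hz.
Qed.

Lemma aut_eq1 g : b g = 1 -> g = 1.
Proof. by move=> h; apply: aut_inj; rewrite h aut1. Qed.

Definition autinv : G -> G := fun g => 
  epsilon (inhabits 1) (fun h => b h = g).

Lemma autinvK : cancel autinv b.
Proof.
move=> g; rewrite /autinv.
apply: (epsilon_spec (inhabits 1) (fun h => b h = g)).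
by have [bi k1 k2] := hb.2; exists (bi g).
Qed.

Lemma autK : cancel b autinv.
Proof. by move=> g; apply: aut_inj; rewrite autinvK. Qed.

Lemma autinv_aut : is_aut autinv.
Proof.
split; last by exists b; [exact: autinvK | exact: autK].
by move=> x y; apply: aut_inj; rewrite hb.1 !autinvK.
Qed.

Lemma central_pre z : central (b z) -> central z.
Proof.
move=> hz g; apply: aut_inj; by rewrite !hb.1 hz.
Qed.

End Morph.

Lemma cancel_central A k B z1 z2 : central z1 -> z1 = z2 ->
  (A * z1) * k * (B * z2)^-1 = A * k * B^-1.
Proof.
move=> hz <-; rewrite invgM !mulgA -(mulgA A z1 k) (hz k) (mulgA A k z1).
by rewrite mulgK.
Qed.

Lemma cancel_central' A k B z1 z2 : central z1 -> z1 = z2 ->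
  (A * z1)^-1 * k * (B * z2) = A^-1 * k * B.
Proof.
move=> hz <-; rewrite invgM -!mulgA (central_inv hz) !mulgA.
by rewrite mulgK.
Qed.

End GroupFacts.

End M6.
Import M6.

Module M7.

Local Open Scope group_scope.

Lemma in_or_app_l (A : Type) (l m : seq A) a : List.In a l -> List.In a (l ++ m).
Proof. by move=> h; apply: List.in_or_app; left. Qed.
Lemma in_or_app_r (A : Type) (l m : seq A) a : List.In a m -> List.In a (l ++ m).
Proof. by move=> h; apply: List.in_or_app; right. Qed.

Section Transport.
Variable G : groupType.

Lemma NK_transport (f : C -> G) (ps ps' : C -> C) (be : G -> G) (Z : G) (e : C -> int) :
  cancel ps ps' -> cancel ps' ps ->
  (forall x, inQ2 x -> inQ2 (ps x)) -> (forall x, inQ2 x -> inQ2 (ps' x)) ->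
  (forall v, inV v -> inV (ps \o v \o ps')) ->
  is_aut be -> central Z ->
  (forall v w, inV v -> cancel v w -> cancel w v ->
     exists l : seq C, forall x, inQ2 x -> e x <> e (w x) -> List.In x l) ->
  inNK f -> inNK (fun x => be (f (ps x)) * gpowz Z (e x)).
Proof.
move=> c1 c2 q1 q2 hV hb hZ AI [hf1 hf2].
set bi := autinv be.
have hbi : is_aut bi := autinv_aut hb.
have bK : cancel bi be := autinvK hb.
have hZe : forall n, central (gpowz Z n) by move=> n; apply: central_pow.
have transK : forall k, inK k -> inK (fun y => bi (k (ps' y))).
  move=> k [l hl]; exists (map ps l) => y hy hne.
  rewrite -[y]c2; apply: in_map_seq; apply: hl; first exact: q2.
  by move=> e1; apply: hne; rewrite e1 (aut1 hbi).
have conjI : forall v w, inV v -> cancel v w -> cancel w v ->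
    inV (ps \o v \o ps') /\ cancel (ps \o v \o ps') (ps \o w \o ps') /\
    cancel (ps \o w \o ps') (ps \o v \o ps').
  move=> v w hv k1 k2; split; first exact: hV.
  by split => y /=; rewrite c1 ?k1 ?k2 c2.
split.
- move=> k v w hk hv k1 k2.
  have [hv' [k1' k2']] := conjI v w hv k1 k2.
  have [l1 hl1] := hf1 _ _ _ (transK k hk) hv' k1' k2'.
  have [l2 hl2] := AI v w hv k1 k2.
  exists (map ps' l1 ++ l2) => x hx hne.
  case: (excluded_middle_informative (e x = e (w x))) => he; last first.
    by apply: in_or_app_r; apply: hl2.
  apply: in_or_app_l; rewrite -[x]c1; apply: in_map_seq; apply: hl1; first exact: q1.
  move=> h1; apply: hne.
  rewrite (cancel_central _ _ _ (hZe _) (congr1 (gpowz Z) he)).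
  have := congr1 be h1; rewrite (aut1 hb) !hb.1 (autV hb) bK /= c1.
  by [].
- move=> k v w hk hv k1 k2.
  have [hv' [k1' k2']] := conjI v w hv k1 k2.
  have [l1 hl1] := hf2 _ _ _ (transK k hk) hv' k1' k2'.
  have [l2 hl2] := AI v w hv k1 k2.
  exists (map ps' l1 ++ l2) => x hx hne.
  case: (excluded_middle_informative (e x = e (w x))) => he; last first.
    by apply: in_or_app_r; apply: hl2.
  apply: in_or_app_l; rewrite -[x]c1; apply: in_map_seq; apply: hl1; first exact: q1.
  move=> h1; apply: hne.
  rewrite (cancel_central' _ _ _ (hZe _) (congr1 (gpowz Z) he)).
  have := congr1 be h1; rewrite (aut1 hb) !hb.1 (autV hb) bK /= c1.
  by [].
Qed.

End Transport.

End M7.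
Import M7.

Module M8.

Local Open Scope ring_scope.

Lemma mu_cocycle p1 p2 : inStabN p1 -> inStabN p2 ->
  exists c0 : int, forall x, inQ2 x ->
    mu (hcomp p1 p2) x = mu p2 (hinv p1 x) + mu p1 x + c0.
Proof.
move=> hp1 hp2.
set r := hinv p1 zeroC.
have [u [hu u0]] := V_trans (q_inQ2 hp1).
exists (logslope u zeroC - kappa p2 u) => x hx.
have [hv hv0] := vx_spec hx.
set v := epsilon _ _ in hv hv0.
set W := hinv p1 \o v \o hfun p1.
have hW : inV W := conjV hp1 hv.
have E12 : mu (hcomp p1 p2) x = logslope (hinv p2 \o W \o hfun p2) (hinv p2 r)
   - logslope v zeroC - nu (dyval (hinv p2 (hinv p1 x))) + nu (dyval x) by [].
have E1 : mu p1 x = logslope W r - logslope v zeroC - nu (dyval (hinv p1 x))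
   + nu (dyval x) by [].
have gWu : good p2 (W \o u) := good_comp (good_V hp2 hW) (good_V hp2 hu).
have eWu : (W \o u) zeroC = hinv p1 x by rewrite /= u0 /W /= hinvK hv0.
have E2 := mu_eq hp2 (Q2_phi hp1 hx) gWu eWu.
rewrite E12 E1 E2.
have c1 := inV_cV (conjV hp2 hu) (hinv p2 zeroC).
have c2 := inV_cV (conjV hp2 hW) ((hinv p2 \o u \o hfun p2) (hinv p2 zeroC)).
have c3 := inV_cV hu zeroC.
have c4 := inV_cV hW (u zeroC).
rewrite /kappa conj_comp (logslope_chain c1 c2) (logslope_chain c3 c4).
have -> : (hinv p2 \o u \o hfun p2) (hinv p2 zeroC) = hinv p2 r by rewrite /= hinvK u0.
rewrite u0 -/(kappa p2 u).
rewrite -/r; lia.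
Qed.

End M8.
Import M8.

Module M9.

Local Open Scope group_scope.

Section Sigma.
Variable G : groupType.
Variable p : homeo.
Hypothesis hp : inStabN p.
Variable b : G -> G.
Hypothesis hb : is_aut b.

Local Notation F := (sigma0 p b).
Local Notation ph := (hfun p).
Local Notation phi := (hinv p).

Lemma F_P a : inZK a -> inZK (F a).
Proof. by case: a => z f hz; apply: aut_central. Qed.

Lemma F_wd a a' : inZK a -> qeq a a' -> qeq (F a) (F a').
Proof.
case: a => z f; case: a' => z' f' /= hz [/= <- [c [hc he]]]; split => //=.
exists (b c); split; first exact: aut_central.
move=> x hx /=; rewrite he; last exact: Q2_phi.
rewrite hb.1 -!mulgA; congr (_ * _).
by apply: (aut_central hb hc).
Qed.

Lemma F_mul a a' : inZK a -> inZK a' -> qeq (F (qmul a a')) (qmul (F a) (F a')).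
Proof.
case: a => z f; case: a' => z' f' /= hz hz'; split; first by rewrite /= hb.1.
exists 1; split; first by move=> g; rewrite mul1g mulg1.
move=> x hx /=; rewrite mulg1 !hb.1 gpowz_mul; last exact: aut_central.
rewrite -!mulgA; congr (_ * _); rewrite !mulgA; congr (_ * _).
by apply: (central_pow (mu p x) (aut_central hb (hz : central z))).
Qed.

Lemma F_inj a a' : inZK a -> inZK a' -> qeq (F a) (F a') -> qeq a a'.
Proof.
case: a => z f; case: a' => z' f' /= hz hz' [/= e1 [c [hc he]]].
have ez : z = z' := aut_inj hb e1.
split => //=; subst z'.
exists (autinv b c); split.
  by apply: (central_pre hb); rewrite autinvK.
move=> y hy; apply: (aut_inj hb); rewrite hb.1 autinvK //.
have := he (ph y) (Q2_ph hp hy); rewrite /= hfunK.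
move=> e2; apply: (mulIg (gpowz (b z) (mu p (ph y)))); rewrite e2.
rewrite -!mulgA; congr (_ * _); exact: (central_pow _ (aut_central hb (hz : central z))).
Qed.

Definition Fpre (a : QE G) : QE G :=
  (autinv b a.1, fun y => autinv b (a.2 (ph y)) * gpowz (autinv b a.1) (- mu p (ph y))%R).

Lemma F_pre a : inZK a -> inZK (Fpre a) /\ qeq (F (Fpre a)) a.
Proof.
case: a => z f /= hz; have hbi := autinv_aut hb.
have hz' : central (autinv b z) by apply: (central_pre hb); rewrite autinvK.
split; first exact: hz'.
split; first by rewrite /= autinvK.
exists 1; split; first by move=> g; rewrite mul1g mulg1.
move=> x hx /=; rewrite mulg1 hinvK hb.1 autinvK // (aut_pow hb) autinvK //.
by rewrite gpowzN // mulgVK.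
Qed.

Lemma AI_e : forall v w, inV v -> cancel v w -> cancel w v ->
  exists l : seq C, forall y, inQ2 y -> (- mu p (ph y))%R <> (- mu p (ph (w y)))%R ->
  List.In y l.
Proof.
move=> v w hv k1 k2.
have k1' : cancel (ph \o v \o phi) (ph \o w \o phi) by move=> y /=; rewrite hfunK k1 hinvK.
have k2' : cancel (ph \o w \o phi) (ph \o v \o phi) by move=> y /=; rewrite hfunK k2 hinvK.
have [l hl] := AI_mu hp (conjV' hp hv) k1' k2'.
exists (map phi l) => y hy hne.
rewrite -[y](hfunK p); apply: in_map_seq; apply: hl; first exact: Q2_ph.
by move=> e; apply: hne; rewrite e /= hfunK.
Qed.

Lemma F_NK a : inZN a -> inZN (F a).
Proof.
case: a => z f [/= hz hf]; split; first exact: aut_central.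
apply: (NK_transport (e := mu p) (hinvK p) (hfunK p) (Q2_phi hp) (Q2_ph hp) (conjV hp) hb
  (aut_central hb hz) _ hf).
move=> v w hv k1 k2; have H := AI_mu hp hv k1 k2. exact H.
Qed.

Lemma Fpre_NK a : inZN a -> inZN (Fpre a).
Proof.
case: a => z f [/= hz hf]; have hbi := autinv_aut hb.
have hz' : central (autinv b z) by apply: (central_pre hb); rewrite autinvK.
split => //=.
exact: (NK_transport (hfunK p) (hinvK p) (Q2_ph hp) (Q2_phi hp) (conjV' hp) hbi
  hz' AI_e hf).
Qed.

Lemma quot_ZK : is_quot_aut (@inZK G) F.
Proof.
split; first exact: F_P.
split; first by move=> a a' ha _; apply: F_wd.
split; first exact: F_mul.
split; first exact: F_inj.
move=> a ha; exists (Fpre a); exact: F_pre.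
Qed.

Lemma quot_ZN : is_quot_aut (@inZN G) F.
Proof.
split; first exact: F_NK.
split; first by move=> a a' [ha _] _; apply: F_wd.
split; first by move=> a a' [ha _] [ha' _]; apply: F_mul.
split; first by move=> a a' [ha _] [ha' _]; apply: F_inj.
move=> a ha; exists (Fpre a); split; first exact: Fpre_NK.
exact: (F_pre ha.1).2.
Qed.

End Sigma.

End M9.
Import M9.

Module M10.

Local Open Scope group_scope.

Lemma mu_hid x : mu hid x = 0%R.
Proof. rewrite /mu /=; set a := logslope _ _; set c := nu _; lia. Qed.

Lemma part2 (G : groupType) (a : QE G) : inZK a -> qeq (sigma0 hid id a) a.
Proof.
case: a => z f hz; split => //=.
exists 1; split; first by move=> g; rewrite mul1g mulg1.
by move=> x hx /=; rewrite mu_hid !mulg1.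
Qed.

Lemma part3 (G : groupType) (p1 p2 : homeo) (b1 b2 : G -> G) (a : QE G) :
  inStabN p1 -> is_aut b1 -> inStabN p2 -> is_aut b2 -> inZK a ->
  qeq (sigma0 (hcomp p1 p2) (b1 \o b2) a) (sigma0 p1 b1 (sigma0 p2 b2 a)).
Proof.
case: a => z f hp1 hb1 hp2 hb2 hz; split => //=.
have [c0 hc0] := mu_cocycle hp1 hp2.
set Z := b1 (b2 z).
have hZ : central Z by apply: aut_central => //; apply: aut_central.
exists (gpowz Z c0)^-1; split; first by apply: central_inv; apply: central_pow.
move=> x hx /=; rewrite hc0 //.
rewrite (gpowzD Z (mu p2 (hinv p1 x) + mu p1 x)%R c0) (gpowzD Z (mu p2 (hinv p1 x)) (mu p1 x)).
rewrite hb1.1 (aut_pow hb1) -/Z.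
by rewrite !mulgA mulgK.
Qed.

Definition delta (G : groupType) (x0 : C) (g : G) : C -> G :=
  fun x => if excluded_middle_informative (x = x0) then g else 1.

Lemma delta_ne (G : groupType) x0 (g : G) x : x <> x0 -> delta x0 g x = 1.
Proof. by rewrite /delta; case: excluded_middle_informative. Qed.

Lemma delta_eq (G : groupType) x0 (g : G) : delta x0 g x0 = g.
Proof. by rewrite /delta; case: excluded_middle_informative. Qed.

Lemma delta_NK (G : groupType) x0 (g : G) : inNK (delta x0 g).
Proof.
split => k v w [l hl] hv k1 k2; exists [:: x0, v x0 & l] => x hx hne.
- case: (excluded_middle_informative (x = x0)) => [->|h1]; first by left.
  case: (excluded_middle_informative (w x = x0)) => [h2|h2].
    by right; left; rewrite -h2 k2.
  right; right; apply: hl => // hk; apply: hne.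
  by rewrite !delta_ne // hk mul1g invg1 mulg1.
- case: (excluded_middle_informative (x = x0)) => [->|h1]; first by left.
  case: (excluded_middle_informative (w x = x0)) => [h2|h2].
    by right; left; rewrite -h2 k2.
  right; right; apply: hl => // hk; apply: hne.
  by rewrite !delta_ne // hk invg1 !mulg1.
Qed.

Definition e0 : C := zeroC.
Definition e1 : C := catC [:: true] zeroC.
Definition e2 : C := catC [:: false; true] zeroC.

Lemma pick3 (A B : C) : exists y, inQ2 y /\ y <> A /\ y <> B.
Proof.
have n01 : e0 <> e1 by move=> h; have := congr1 (fun f => f 0%N) h.
have n02 : e0 <> e2 by move=> h; have := congr1 (fun f => f 1%N) h.
have n12 : e1 <> e2 by move=> h; have := congr1 (fun f => f 0%N) h.
case: (excluded_middle_informative (e0 <> A /\ e0 <> B)) => h0.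
  by exists e0; split => //; exists 0%N.
case: (excluded_middle_informative (e1 <> A /\ e1 <> B)) => h1.
  by exists e1; split => //; apply: inQ2_catC.
have key : forall e, ~ (e <> A /\ e <> B) -> e = A \/ e = B.
  move=> e he; case: (excluded_middle_informative (e = A)) => ha; first by left.
  case: (excluded_middle_informative (e = B)) => hb; first by right.
  by exfalso; apply: he.
have {}h0 := key _ h0; have {}h1 := key _ h1.
exists e2; split; first exact: inQ2_catC.
split => h.
- case: h0 => h0; first by apply: n02; rewrite h0 h.
  case: h1 => h1; first by apply: n12; rewrite h1 h.
  by apply: n01; rewrite h0 h1.
- case: h0 => h0; last by apply: n02; rewrite h0 h.
  case: h1 => h1; last by apply: n12; rewrite h1 h.
  by apply: n01; rewrite h0 h1.
Qed.

Lemma inj_point (G : groupType) (p p' : homeo) (b b' : G -> G) :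
  inStabN p -> is_aut b -> inStabN p' -> is_aut b' ->
  (forall a : QE G, inZN a -> qeq (sigma0 p b a) (sigma0 p' b' a)) ->
  forall x0 (g : G), inQ2 x0 -> g <> 1 -> hfun p x0 = hfun p' x0 /\ b g = b' g.
Proof.
move=> hp hb hp' hb' H x0 g hx0 hg.
have hza : inZN ((1 : G), delta x0 g).
  by split; [move=> h; rewrite mul1g mulg1 | exact: delta_NK].
have [_ [c [hc he]]] := H _ hza.
move: he => /= he.
have heq : forall x, inQ2 x -> b' (delta x0 g (hinv p' x)) = b (delta x0 g (hinv p x)) * c.
  move=> x hx; have := he x hx.
  by rewrite (aut1 hb) (aut1 hb') !gpowz1 !mulg1.
have [y [hy [hy1 hy2]]] := pick3 (hfun p x0) (hfun p' x0).
have c1 : c = 1.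
  have := heq y hy; rewrite !delta_ne ?(aut1 hb) ?(aut1 hb') ?mul1g //.
  - by move=> e; apply: hy1; rewrite -e hinvK.
  - by move=> e; apply: hy2; rewrite -e hinvK.
have := heq (hfun p x0) (Q2_ph hp hx0); rewrite hfunK delta_eq c1 mulg1.
case: (excluded_middle_informative (hinv p' (hfun p x0) = x0)) => e.
  rewrite e delta_eq => <-; split => //.
  by rewrite -[in RHS]e hinvK.
rewrite delta_ne // (aut1 hb') => /esym /(aut_eq1 hb).
by move=> h; exfalso; apply: hg.
Qed.

Lemma part5 (G : groupType) (nontriv : exists g : G, g <> 1) (p p' : homeo) (b b' : G -> G) :
  inStabN p -> is_aut b -> inStabN p' -> is_aut b' ->
  (forall a : QE G, inZN a -> qeq (sigma0 p b a) (sigma0 p' b' a)) ->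
  hfun p =1 hfun p' /\ b =1 b'.
Proof.
move=> hp hb hp' hb' H.
have [g0 hg0] := nontriv.
split.
  move=> x; apply: functional_extensionality => i.
  have [M1 hM1] := hfun_cont p x i.+1.
  have [M2 hM2] := hfun_cont p' x i.+1.
  set x0 := catC (ctake (M1 + M2) x) zeroC.
  have hx0 : inQ2 x0 by apply: inQ2_catC.
  have ag : forall j, (j < M1 + M2)%N -> x0 j = x j.
    move=> j hj; rewrite /x0 /catC size_ctake hj nth_mkseq //.
  have [e _] := inj_point hp hb hp' hb' H hx0 hg0.
  rewrite -(hM1 x0 _ i) //; last first.
    by move=> j hj; apply: ag; apply: (leq_trans hj); apply: leq_addr.
  rewrite -(hM2 x0 _ i) //; last first.
    by move=> j hj; apply: ag; apply: (leq_trans hj); apply: leq_addl.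
  by rewrite e.
move=> h; case: (excluded_middle_informative (h = 1)) => [->|hh].
  by rewrite (aut1 hb) (aut1 hb').
by have [_ ->] := inj_point hp hb hp' hb' H zero_inQ2 hh.
Qed.

Theorem main15 (G : groupType) (nontriv : exists g : G, g <> 1) :
  (forall (p : homeo) (b : G -> G), inStabN p -> is_aut b ->
     is_quot_aut (@inZK G) (sigma0 p b)) /\
  (forall a : QE G, inZK a -> qeq (sigma0 hid id a) a) /\
  (forall (p1 p2 : homeo) (b1 b2 : G -> G) (a : QE G),
     inStabN p1 -> is_aut b1 -> inStabN p2 -> is_aut b2 -> inZK a ->
     qeq (sigma0 (hcomp p1 p2) (b1 \o b2) a) (sigma0 p1 b1 (sigma0 p2 b2 a))) /\
  (forall (p : homeo) (b : G -> G), inStabN p -> is_aut b ->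
     is_quot_aut (@inZN G) (sigma0 p b)) /\
  (forall (p p' : homeo) (b b' : G -> G),
     inStabN p -> is_aut b -> inStabN p' -> is_aut b' ->
     (forall a : QE G, inZN a -> qeq (sigma0 p b a) (sigma0 p' b' a)) ->
     hfun p =1 hfun p' /\ b =1 b').
Proof.
split; first by move=> p b hp hb; apply: quot_ZK.
split; first exact: part2.
split; first exact: part3.
split; first by move=> p b hp hb; apply: quot_ZN.
exact: part5.
Qed.

End M10.
Import M10.

Local Open Scope group_scope.

Theorem mainTheorem15 (G : groupType) (nontriv : exists g : G, g <> 1) :
  (* each sigma_0(phi,beta) is a well-defined automorphism of Z(G) x Kbar/Z(G) *)
  (forall (p : homeo) (b : G -> G), inStabN p -> is_aut b ->
     is_quot_aut (@inZK G) (sigma0 p b)) /\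
  (* action: identity acts trivially *)
  (forall a : QE G, inZK a -> qeq (sigma0 hid id a) a) /\
  (* action: compatibility with the product in Stab_N(Q_2) x Aut(G) *)
  (forall (p1 p2 : homeo) (b1 b2 : G -> G) (a : QE G),
     inStabN p1 -> is_aut b1 -> inStabN p2 -> is_aut b2 -> inZK a ->
     qeq (sigma0 (hcomp p1 p2) (b1 \o b2) a) (sigma0 p1 b1 (sigma0 p2 b2 a))) /\
  (* the action preserves Z(G) x N_Kbar(G)/Z(G), inducing automorphisms of it *)
  (forall (p : homeo) (b : G -> G), inStabN p -> is_aut b ->
     is_quot_aut (@inZN G) (sigma0 p b)) /\
  (* the induced morphism sigma is injective *)
  (forall (p p' : homeo) (b b' : G -> G),
     inStabN p -> is_aut b -> inStabN p' -> is_aut b' ->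
     (forall a : QE G, inZN a -> qeq (sigma0 p b a) (sigma0 p' b' a)) ->
     hfun p =1 hfun p' /\ b =1 b').
Proof. exact: (main15 nontriv). Qed.
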